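(* Let $\epsilon_\tau,\omega_1,\omega_2\in(0,1)$, $\tau_{\mathrm{prev}}>0$, $c\in\mathbb{R}^m$, and set $a:=(1-\epsilon_\tau)(1-\omega_1)(1-\omega_2)\|c\|_1$. For a real number $h$ define the update $T(h):=\tau_{\mathrm{prev}}$ if $\|c\|_1=0$ or $h\le a/\tau_{\mathrm{prev}}$, and $T(h):=a/h$ otherwise. Let $\theta_3>0$, $\beta\in(0,1)$, $\sigma\in[2,4]$ with $\theta_3\beta^{\sigma/2}\le\tfrac12$, and let $h,\bar h\in\mathbb{R}$ satisfy $|\bar h-h|\le\theta_3\beta^{\sigma/2}|h|$. Then $|T(\bar h)-T(h)|\le2\theta_3\beta^{\sigma/2}\tau_{\mathrm{prev}}$. Consequently, if $\tau_{\mathrm{prev}}\le\tau_{\max}$, $g,d\in\mathbb{R}^n$ and $D\ge0$ satisfy $|g^Td|\le\kappa_{gd,\Delta l}D$, then $$|(T(\bar h)-T(h))\,g^Td|\le 2\theta_3\tau_{\max}\kappa_{gd,\Delta l}\,\beta^{\sigma/2}D.$$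
   Context: In the paper, $h=g^Td+\max\{d^THd,\epsilon_d\|d\|_2^2\}$ (deterministic quantities), $\bar h=\bar g^T\bar d+\max\{\bar d^TH\bar d,\epsilon_d\|\bar d\|_2^2\}$ (stochastic quantities), $T(\bar h)$ and $T(h)$ are the stochastic and deterministic merit parameters obtained from the previous value $\tau_{\mathrm{prev}}$, and $D=\Delta l(\tau,g,d)$. *)

(* Defs.v *)
From mathcomp Require Import all_boot all_order all_algebra.
From mathcomp Require Import all_classical all_reals all_analysis.
Set Implicit Arguments. Unset Strict Implicit. Unset Printing Implicit Defensive.
Import Order.TTheory GRing.Theory Num.Theory.
Local Open Scope ring_scope.

Definition norm1 (R : realType) (m : nat) (c : 'rV[R]_m) : R :=
  \sum_(i < m) `|c ord0 i|.

Definition dotv (R : realType) (n : nat) (g d : 'rV[R]_n) : R :=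
  \sum_(i < n) g ord0 i * d ord0 i.

Definition merit_a (R : realType) (m : nat) (eps w1 w2 : R) (c : 'rV[R]_m) : R :=
  (1 - eps) * (1 - w1) * (1 - w2) * norm1 c.

Definition Tupd (R : realType) (m : nat) (eps w1 w2 tprev : R) (c : 'rV[R]_m)
  (h : R) : R :=
  let a := merit_a eps w1 w2 c in
  if (norm1 c == 0) || (h <= a / tprev) then tprev else a / h.

(* Main.v *)
Require Import Defs.
From mathcomp Require Import all_boot all_order all_algebra.
From mathcomp Require Import all_classical all_reals all_analysis.
From mathcomp Require Import ring lra.
Import Order.TTheory GRing.Theory Num.Theory.
Local Open Scope ring_scope.
Lemma key (R : realFieldType) (a tp e h hb : R) : 0 < a -> 0 < tp -> 0 <= e -> e <= 2^-1 ->
  `|hb - h| <= e * `|h| ->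
  `|(if hb <= a / tp then tp else a / hb) - (if h <= a / tp then tp else a / h)| <= 2 * e * tp.
Proof.
move=> a0 tp0 e0 e1 H.
have ltd x : (a / tp < x) = (a < x * tp) by rewrite ltr_pdivrMr.
have hp : 0 < h -> True by [].
have [hle|hgt] := leP h (a/tp); have [hble|hbgt] := leP hb (a/tp).
- by rewrite subrr normr0; nra.
- move: hbgt; rewrite ltd => hbgt.
  have hb0 : 0 < hb by nra.
  have h0 : 0 < h.
    case: (ltrP 0 h) => // hn; move: H; rewrite (ler0_norm hn).
    move=> /ler_normlP [H1 H2]; nra.
  move: H; rewrite (gtr0_norm h0) => /ler_normlP [H1 H2].
  have u1 : hb * hb^-1 = 1 by rewrite mulfV // gt_eqF.
  have u0 : 0 < hb^-1 by rewrite invr_gt0.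
  have htp : h * tp <= a by rewrite -ler_pdivlMr.
  have hh : h <= hb by nra.
  have au : a * hb^-1 < tp.
    by move: hbgt; rewrite -(ltr_pM2r u0) mulrAC u1 mul1r.
  have hu : 1 - h * hb^-1 <= e.
    have : (hb - h) * hb^-1 <= e * hb * hb^-1.
      by rewrite ler_pM2r //; nra.
    by rewrite mulrBl u1 -mulrA u1 mulr1.
  have : h * hb^-1 * tp <= a * hb^-1.
    by rewrite mulrAC ler_pM2r.
  move=> ?; rewrite ler_norml; apply/andP; split; nra.
- move: hgt; rewrite ltd => hgt.
  have h0 : 0 < h by nra.
  move: H; rewrite (gtr0_norm h0) => /ler_normlP [H1 H2].
  have u1 : h * h^-1 = 1 by rewrite mulfV // gt_eqF.
  have u0 : 0 < h^-1 by rewrite invr_gt0.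
  have htp : hb * tp <= a by rewrite -ler_pdivlMr.
  have au : a * h^-1 < tp.
    by move: hgt; rewrite -(ltr_pM2r u0) mulrAC u1 mul1r.
  have hu : 1 - hb * h^-1 <= e.
    have : (h - hb) * h^-1 <= e * h * h^-1.
      by rewrite ler_pM2r //; nra.
    by rewrite mulrBl u1 -mulrA u1 mulr1.
  have : hb * h^-1 * tp <= a * h^-1.
    by rewrite mulrAC ler_pM2r.
  move=> ?; rewrite ler_norml; apply/andP; split; nra.
- move: hgt hbgt; rewrite !ltd => hgt hbgt.
  have h0 : 0 < h by nra.
  have hb0 : 0 < hb by nra.
  move: H; rewrite (gtr0_norm h0) => /ler_normlP [H1 H2].
  have u1 : h * h^-1 = 1 by rewrite mulfV // gt_eqF.
  have u0 : 0 < h^-1 by rewrite invr_gt0.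
  have v1 : hb * hb^-1 = 1 by rewrite mulfV // gt_eqF.
  have v0 : 0 < hb^-1 by rewrite invr_gt0.
  have E : a / hb - a / h = a * (h - hb) * h^-1 * hb^-1.
    by field; rewrite !gt_eqF.
  rewrite E normrM (gtr0_norm v0) normrM (gtr0_norm u0) normrM (gtr0_norm a0).
  have au : a * hb^-1 < tp.
    by move: hbgt; rewrite -(ltr_pM2r v0) mulrAC v1 mul1r.
  have N : `|h - hb| <= e * h by rewrite distrC ler_norml H2 /=; nra.
  have S1 : a * `|h - hb| * h^-1 * hb^-1 <= a * (e * h) * h^-1 * hb^-1.
    by rewrite !ler_pM2r // ler_pM2l.
  apply: (le_trans S1).
  have -> : a * (e * h) * h^-1 * hb^-1 = e * (a * hb^-1).
    by field; rewrite ?gt_eqF.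
  nra.
Qed.

Theorem lemma4p13 (R : realType) (m : nat) (eps w1 w2 tprev : R)
  (c : 'rV[R]_m) (theta3 beta sigma h hbar : R) :
  0 < eps < 1 -> 0 < w1 < 1 -> 0 < w2 < 1 -> 0 < tprev ->
  0 < theta3 -> 0 < beta < 1 -> 2 <= sigma <= 4 ->
  theta3 * beta `^ (sigma / 2) <= 2^-1 ->
  `|hbar - h| <= theta3 * beta `^ (sigma / 2) * `|h| ->
  `|Tupd eps w1 w2 tprev c hbar - Tupd eps w1 w2 tprev c h|
     <= 2 * theta3 * beta `^ (sigma / 2) * tprev
  /\
  (forall (tmax kappa D : R) (n : nat) (g d : 'rV[R]_n),
     tprev <= tmax -> 0 <= D -> `|dotv g d| <= kappa * D ->
     `|(Tupd eps w1 w2 tprev c hbar - Tupd eps w1 w2 tprev c h) * dotv g d|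
       <= 2 * theta3 * tmax * kappa * beta `^ (sigma / 2) * D).
Proof.
move=> /andP[e0 e1] /andP[w10 w11] /andP[w20 w21] tp0 th0 /andP[b0 b1] _ He H.
set e := theta3 * beta `^ (sigma / 2) in He H *.
have e0' : 0 <= e by apply: mulr_ge0; [exact: ltW | exact: powR_ge0].
have P1 : `|Tupd eps w1 w2 tprev c hbar - Tupd eps w1 w2 tprev c h| <= 2 * e * tprev.
  rewrite /Tupd /=.
  have [/eqP nz|nz] := boolP (norm1 c == 0).
    by rewrite /= subrr normr0; nra.
  rewrite /=.
  apply: key => //.
  have n0 : 0 <= norm1 c by rewrite /norm1 sumr_ge0.
  have n1 : 0 < norm1 c by rewrite lt_neqAle eq_sym nz.
  rewrite /merit_a !mulr_gt0 // subr_gt0.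
  1-3: done.
split; first by move: P1; rewrite /e mulrA.
move=> tmax kappa D n g d tm D0 Hd.
have kD : 0 <= kappa * D by apply: le_trans Hd.
rewrite normrM.
apply: (le_trans (ler_pM (normr_ge0 _) (normr_ge0 _) P1 Hd)).
have X : 2 * e * tprev <= 2 * e * tmax by rewrite ler_wpM2l // mulr_ge0.
apply: (le_trans (ler_wpM2r kD X)).
have -> : 2 * theta3 * tmax * kappa * beta `^ (sigma / 2) * D = 2 * e * tmax * (kappa * D).
  by rewrite /e; ring.
by [].
Qed.
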